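(* Let $T_1,T_2$ be equidistant trees with $n=3$ leaves such that $T_1$ and $T_2$ have different tree topologies. Then, moving along the tropical line segment $\Gamma_{T_1,T_2}$ from $T_1$ to $T_2$, the tree topology changes from the tree topology of $T_1$ to that of the star tree, and then from the star tree to the tree topology of $T_2$.
   Context: Max-plus arithmetic: $a\oplus b=\max\{a,b\}$, $a\odot b=a+b$; vectors in $\mathbb{R}^3$ with coordinates indexed by pairs $12,13,23$ are considered modulo $\mathbb{R}\mathbf 1$. An equidistant tree is a rooted phylogenetic tree on leaves $\{1,2,3\}$ with nonnegative edge lengths and all root-to-leaf distances equal; its ultrametric $u=(u_{12},u_{13},u_{23})$ consists of pairwise leaf distances, and every ultrametric (maximum of the three coordinates attained at least twice) determines a unique such tree. The star tree has all leaves attached to the root (constant ultrametric). $\Gamma_{T_1,T_2}$ denotes the tropical line segment $\{a\odot u\oplus b\odot v:a,b\in\mathbb R\}$ between the ultrametrics $u,v$ of $T_1,T_2$; each of its points is an ultrametric and thus an equidistant tree. *)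

(* Defs.v *)
From Stdlib Require Import Reals.
Open Scope R_scope.

(* Coordinates of R^3 indexed by the leaf pairs 12, 13, 23. *)
Inductive leafpair := p12 | p13 | p23.

Definition vec := leafpair -> R.

Definition tplus (a b : R) : R := a + b.
Definition tmax (a b : R) : R := Rmax a b.

Definition trop_comb (a : R) (u : vec) (b : R) (v : vec) : vec :=
  fun k => tmax (tplus a (u k)) (tplus b (v k)).

Definition is_ultrametric (u : vec) : Prop :=
  let m := Rmax (u p12) (Rmax (u p13) (u p23)) in
  (u p12 = m /\ u p13 = m) \/ (u p12 = m /\ u p23 = m) \/ (u p13 = m /\ u p23 = m).

(* Tree topologies of equidistant trees on leaves {1,2,3}: the star tree, or
   a binary tree with a cherry {i,j}. *)
Inductive topology := Star | Cherry (c : leafpair).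

Definition has_topology (u : vec) (t : topology) : Prop :=
  match t with
  | Star => u p12 = u p13 /\ u p13 = u p23
  | Cherry p12 => u p12 < u p13 /\ u p12 < u p23
  | Cherry p13 => u p13 < u p12 /\ u p13 < u p23
  | Cherry p23 => u p23 < u p12 /\ u p23 < u p13
  end.

(* Main.v *)
Require Import Defs.
From Stdlib Require Import Reals Lra.
Open Scope R_scope.

Lemma rmax_spec (x y : R) : (x <= y /\ Rmax x y = y) \/ (y < x /\ Rmax x y = x).
Proof. unfold Rmax; destruct (Rle_dec x y); [left|right]; split; lra. Qed.

Theorem lemma1 (u v : vec) (t1 t2 : topology) :
  is_ultrametric u -> is_ultrametric v ->
  has_topology u t1 -> has_topology v t2 -> t1 <> t2 ->
  exists s s' : R, s <= s' /\
    forall a b : R,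
      (b - a < s -> has_topology (trop_comb a u b v) t1) /\
      (s <= b - a <= s' -> has_topology (trop_comb a u b v) Star) /\
      (s' < b - a -> has_topology (trop_comb a u b v) t2).
Proof.
  unfold is_ultrametric; intros Hu Hv H1 H2 Hne.
  exists (Rmax (u p12) (Rmax (u p13) (u p23)) - Rmax (v p12) (Rmax (v p13) (v p23))).
  exists (Rmax (u p12) (Rmax (u p13) (u p23)) - Rmax (v p12) (Rmax (v p13) (v p23))).
  split; [lra|].
  destruct (rmax_spec (u p13) (u p23)) as [[? E1]|[? E1]]; rewrite E1 in *;
  destruct (rmax_spec (u p12) (u p13)) as [[? E2]|[? E2]]; try rewrite E2 in *;
  destruct (rmax_spec (u p12) (u p23)) as [[? E3]|[? E3]]; try rewrite E3 in *;
  destruct (rmax_spec (v p13) (v p23)) as [[? F1]|[? F1]]; rewrite F1 in *;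
  destruct (rmax_spec (v p12) (v p13)) as [[? F2]|[? F2]]; try rewrite F2 in *;
  destruct (rmax_spec (v p12) (v p23)) as [[? F3]|[? F3]]; try rewrite F3 in *;
  intros a b; unfold trop_comb, tmax, tplus;
  destruct t1 as [|[| |]]; destruct t2 as [|[| |]]; simpl in *;
  try (exfalso; lra); try congruence;
  repeat split; intros;
  destruct (rmax_spec (a + u p12) (b + v p12)) as [[? G1]|[? G1]]; try rewrite G1;
  destruct (rmax_spec (a + u p13) (b + v p13)) as [[? G2]|[? G2]]; try rewrite G2;
  destruct (rmax_spec (a + u p23) (b + v p23)) as [[? G3]|[? G3]]; try try rewrite G3;
  lra.
Qed.
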